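(* Let $\mathbb{F}$ be a finite field with $q$ elements, let $\gamma\in(0,1/2]$, and let $H\subseteq\mathbb{F}^2$ with $|H|=2\gamma q^2$. Let $r$ be an integer with $\frac{2\ln q}{\gamma^2}<r\le\gamma q$. Then there exist subsets $S_1,S_2\subseteq\mathbb{F}$ such that (1) $|S_1|=r$; (2) $|S_2|\ge\gamma q$; (3) $|(\mathbb{F}\times S_2)\cap H|\ge|H|/2=\gamma q^2$; (4) for all $b\in S_2$, $|\{(a,b):a\in\mathbb{F}\}\cap H|\ge\gamma q$; (5) for all $b\in S_2$, $|\{(a,b):a\in S_1\}\cap H|\ge\frac{\gamma}{2}|S_1|$. *)

(* Defs.v *)
From HB Require Import structures.
From mathcomp Require Import all_boot all_order all_algebra all_field.
From mathcomp Require Import all_classical all_reals all_analysis.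

(* Main.v *)
Require Import Defs.
From HB Require Import structures.
From mathcomp Require Import all_boot all_order all_algebra all_field.
From mathcomp Require Import all_classical all_reals all_analysis.
From mathcomp Require Import ring lra zify.
Import Order.TTheory GRing.Theory Num.Theory numFieldNormedType.Exports.
Local Open Scope ring_scope.
Local Open Scope ring_scope.
Local Close Scope ring_scope.
Section C.
Variable T : finType.

Lemma count_supsets (T0 : {set T}) r : #|T0| <= r ->
  #|[set S : {set T} | (T0 \subset S) && (#|S| == r)]| = 'C(#|T| - #|T0|, r - #|T0|).
Proof.
move=> kr.
have hC : #|~: T0| = #|T| - #|T0| by rewrite -(cardsC T0) addKn.
rewrite -hC -cards_draws.
set D := [set S' : {set T} | S' \subset ~: T0 & #|S'| == r - #|T0|].
have inj : {in D &, injective (fun S' => S' :|: T0)}.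
  move=> S1 S2; rewrite !inE => /andP[s1 _] /andP[s2 _] eq12.
  apply/finset.setP => x; move/finset.setP: eq12 => /(_ x); rewrite !inE.
  case xT: (x \in T0); last by rewrite !orbF.
  move=> _; have /fintype.subsetP h1 := s1; have /fintype.subsetP h2 := s2.
  case x1: (x \in S1); first by have := h1 _ x1; rewrite inE xT.
  case x2: (x \in S2); first by have := h2 _ x2; rewrite inE xT.
  by [].
rewrite -(card_in_imset inj); apply: eq_card => S.
rewrite inE; apply/andP/imsetP.
- move=> [sub /eqP cS]; exists (S :\: T0).
    rewrite inE finset.subsetDr /= cardsD (finset.setIidPr sub) cS //.
  apply/finset.setP => x; rewrite !inE; case xT: (x \in T0) => /=.
    exact: (fintype.subsetP sub).
  by rewrite orbF.
- move=> [S' + ->]; rewrite inE => /andP[sub /eqP cS']; split.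
    exact: finset.subsetUr.
  rewrite cardsU cS'.
  have -> : S' :&: T0 = finset.set0.
    apply/finset.setP => x; rewrite !inE; case xS: (x \in S') => //=.
    by have := fintype.subsetP sub _ xS; rewrite inE => /negbTE.
  by rewrite cards0 subn0 subnK.
Qed.

Lemma sum_bin_cap (B : {set T}) k r : k <= r ->
  \sum_(S : {set T} | #|S| == r) 'C(#|S :&: B|, k) = 'C(#|B|, k) * 'C(#|T| - k, r - k).
Proof.
move=> kr.
transitivity (\sum_(S : {set T} | #|S| == r) \sum_(T0 : {set T} | (T0 \subset S :&: B) && (#|T0| == k)) 1).
  by apply: eq_bigr => S _; rewrite sum1dep_card cards_draws.
rewrite (exchange_big_dep (fun T0 : {set T} => (T0 \subset B) && (#|T0| == k))); last first.
  by move=> S T0 _ /andP[sub ->]; rewrite andbT (fintype.subset_trans sub) ?finset.subsetIr.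
rewrite /=.
transitivity (\sum_(T0 : {set T} | (T0 \subset B) && (#|T0| == k)) 'C(#|T| - k, r - k)).
  apply: eq_bigr => T0 /andP[sub /eqP cT0].
  rewrite sum1dep_card -cT0 -count_supsets ?cT0 //.
  apply: eq_card => S; rewrite !inE finset.subsetI sub andbT.
  by rewrite eqxx andbT andbC.
rewrite (eq_bigr (fun _ => 1 * 'C(#|T| - k, r - k))); last by move=> ? _; rewrite mul1n.
by rewrite -big_distrl /= sum1dep_card cards_draws.
Qed.


Lemma ffact_ratio b q k : b <= q -> b ^_ k * q ^ k <= q ^_ k * b ^ k.
Proof.
move=> bq; elim: k => [|k IH]; first by rewrite !ffactn0 !expn0.
rewrite !ffactnSr !expnS.
have h : (b - k) * q <= (q - k) * b.
  rewrite !mulnBl mulnC leq_sub2l // leq_mul2l bq orbT //.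
have -> : b ^_ k * (b - k) * (q * q ^ k) = (b ^_ k * q ^ k) * ((b - k) * q).
  by nia.
have -> : q ^_ k * (q - k) * (b * b ^ k) = (q ^_ k * b ^ k) * ((q - k) * b).
  by nia.
exact: leq_mul.
Qed.

Lemma bin_ratio b q k : b <= q -> 'C(b, k) * q ^ k <= 'C(q, k) * b ^ k.
Proof.
move=> bq; have := @ffact_ratio b q k bq.
rewrite -!bin_ffact.
have -> : 'C(b, k) * k`! * q ^ k = k`! * ('C(b, k) * q ^ k) by nia.
have -> : 'C(q, k) * k`! * b ^ k = k`! * ('C(q, k) * b ^ k) by nia.
by rewrite leq_pmul2l ?fact_gt0.
Qed.
End C.

Local Open Scope ring_scope.
Section S.
Variable R : realType.

Lemma ndecr_of_deriv (g g' : R -> R) (a b : R) :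
  (forall x : R, is_derive x (1:R) g (g' x)) -> (forall x, a < x < b -> 0 <= g' x) ->
  a <= b -> g a <= g b.
Proof.
move=> dg pos ab.
apply: (@ger0_derive1_ndecr R g a b) => //.
- move=> x; rewrite in_itv /= => xab.
  by rewrite derive1E (@derive_val _ _ _ _ _ _ _ (dg x)); apply: pos.
- have cg : continuous (g : R -> R).
    move=> x; apply: differentiable_continuous; apply/derivable1_diffP.
    by case: (dg x).
  exact: (continuous_subspaceT cg).
Qed.

Lemma expN_lb (z : R) : 0 <= z -> 1 - z + z ^+ 2 / 2 - z ^+ 3 / 6 <= expR (- z).
Proof.
move=> z0.
have dg : forall x : R, is_derive x (1:R) (fun y : R => - (expR y * (1 - y + y ^+ 2 / 2 - y ^+ 3 / 6)))
   (expR x * x ^+ 3 / 6).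
  move=> x; apply: is_derive_eq; rewrite /GRing.scale /=; by field.
have := ndecr_of_deriv _ _ _ _ dg _ z0.
move=> H.
have {}H : expR z * (1 - z + z ^+ 2 / 2 - z ^+ 3 / 6) <= 1.
  rewrite -lerN2; apply: le_trans (H _).
    rewrite expR0 mul1r !expr0n /= !mul0r; lra.
  move=> x /andP[x0 _]; apply: mulr_ge0; last by rewrite invr_ge0.
  by apply: mulr_ge0; [exact: expR_ge0 | apply: exprn_ge0; exact: ltW].
rewrite expRN -(ler_pM2l (expR_gt0 z)) mulfV ?expR_eq0 //.
Qed.

Lemma expN1_ub : expR (-1) * (1 + 1 + 1/2 + 1/6 + 1/24) <= 1 :> R.
Proof.
have dg : forall x : R, is_derive x (1:R) (fun y : R => expR y * (1 - y + y ^+ 2 / 2 - y ^+ 3 / 6 + y ^+ 4 / 24))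
   (expR x * x ^+ 4 / 24).
  move=> x; apply: is_derive_eq; rewrite /GRing.scale /=; by field.
have := ndecr_of_deriv _ _ (-1) 0 dg.
move=> H.
have -> : (1 + 1 + 1 / 2 + 1 / 6 + 1 / 24 : R) = 1 - -1 + (-1) ^+ 2 / 2 - (-1) ^+ 3 / 6 + (-1) ^+ 4 / 24 by ring.
apply: le_trans (H _ _) _.
- move=> x _; apply: mulr_ge0; last by rewrite invr_ge0.
  by apply: mulr_ge0; [exact: expR_ge0 | rewrite (_ : 4 = 2 * 2)%N // exprM sqr_ge0].
- lra.
- rewrite expR0 mul1r !expr0n /= !mul0r; lra.
Qed.

Lemma poly_ineq (c : R) : 0 < c -> c <= 1/2 ->
  24 / 65 * c + (1 - c) <= 1 - (c/2 + c^+2/2) + (c/2 + c^+2/2) ^+ 2 / 2 - (c/2 + c^+2/2) ^+ 3 / 6.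
Proof.
move=> c0 c1.
set z := c/2 + c^+2/2.
have z0 : 0 <= z by rewrite /z; nra.
have z1 : z <= 3/8 by rewrite /z; nra.
have h1 : z ^+ 3 / 6 <= z ^+ 2 * (3/8) / 6.
  rewrite ler_pM2r ?invr_gt0 //; rewrite exprS mulrC; apply: ler_wpM2l => //; exact: sqr_ge0.
suff : z - 7 / 16 * z ^+ 2 <= 41 / 65 * c by lra.
have g : 25 * c - 14 * c ^+ 2 - 7 * c ^+ 3 <= 65/8.
  have hA : 0 <= (1/2 - c) * (65/4 - 35/2 * c - 7 * c ^+ 2).
    apply: mulr_ge0; first lra. nra.
  lra.
have hB : 0 <= c * (65/8 - (25 * c - 14 * c ^+ 2 - 7 * c ^+ 3)).
  apply: mulr_ge0; lra.
rewrite /z; nra.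
Qed.

Lemma key_ineq (c : R) : 0 < c -> c <= 1/2 ->
  c + (1 - c) * expR 1 <= expR (1 - c/2 - c^+2/2).
Proof.
move=> c0 c1.
have e0 := expR_gt0 (1:R).
have hf : expR (-1) <= 24/65 :> R.
  have := expN1_ub; have f0 := expR_gt0 (-1 : R); lra.
have fe : expR (-1) * expR 1 = 1 :> R by rewrite expRN mulVf ?expR_eq0.
have hE := expN_lb (c/2 + c^+2/2) (ltac:(nra)).
have hp := poly_ineq c c0 c1.
rewrite (_ : 1 - c/2 - c^+2/2 = 1 + -(c/2 + c^+2/2)); last by ring.
rewrite expRD.
set E := expR (- _) in hE *.
set e := expR 1 in e0 fe *.
set f := expR (-1) in hf fe.
have : c * f + (1 - c) <= E by nra.
move=> H.
have -> : c + (1 - c) * e = e * (c * f + (1 - c)).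
  by rewrite mulrDr mulrCA (mulrC e f) fe mulr1 mulrC.
by rewrite ler_pM2l.
Qed.
End S.

Local Open Scope ring_scope.

Section RC.
Variable R : realType.
Variable T : finType.

Lemma pow_expand (x : R) (Y r : nat) : (Y <= r)%N ->
  (x + 1) ^+ Y = \sum_(i < r.+1) x ^+ i *+ 'C(Y, i).
Proof.
move=> Yr; rewrite exprD1n (big_ord_widen r.+1 (fun i => x ^+ i *+ 'C(Y, i))) //.
rewrite big_mkcond; apply: eq_bigr => i _; case: ifP => // /negbT.
by rewrite -leqNgt => h; rewrite bin_small.
Qed.

Lemma bin_identity (q r k : nat) : (k <= r)%N ->
  ('C(q, r) * 'C(r, k) = 'C(q, k) * 'C(q - k, r - k))%N.
Proof.
move=> kr.
have := @sum_bin_cap ('I_q) [set: 'I_q] k r kr.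
rewrite cardsT card_ord => <-.
rewrite (eq_bigr (fun _ => 1 * 'C(r, k))%N); last first.
  by move=> S /eqP cS; rewrite finset.setIT cS mul1n.
by rewrite -big_distrl /= sum1dep_card card_draws card_ord.
Qed.

Lemma gen_bound (B : {set T}) (r : nat) (u : R) : 1 <= u -> (0 < #|T|)%N ->
  \sum_(S : {set T} | #|S| == r) u ^+ #|S :&: B| <=
  'C(#|T|, r)%:R * (#|B|%:R / #|T|%:R * (u - 1) + 1) ^+ r.
Proof.
move=> u1 q0.
set x := u - 1.
have x0 : 0 <= x by rewrite /x subr_ge0.
rewrite (eq_bigr (fun S : {set T} => \sum_(k < r.+1) x ^+ k *+ 'C(#|S :&: B|, k))); last first.
  move=> S /eqP cS.
  rewrite -pow_expand /x ?subrK //.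
  by rewrite -cS subset_leq_card // finset.subsetIl.
rewrite exchange_big /= exprD1n mulr_sumr; apply: ler_sum => k _.
rewrite sumrMnr sum_bin_cap; last by rewrite -ltnS.
have kr : (k <= r)%N by rewrite -ltnS.
have hid := @bin_identity #|T| r k kr.
have hr := @bin_ratio #|B| #|T| k (max_card _).
set q := #|T| in hid hr *.
set b := #|B| in hr *.
have qpos : 0 < q%:R ^+ k :> R by apply: exprn_gt0; rewrite ltr0n.
have H : ('C(b, k) * 'C(q - k, r - k))%:R * q%:R ^+ k <= ('C(q, r) * 'C(r, k))%:R * b%:R ^+ k :> R.
  rewrite hid -!natrX -!natrM ler_nat.
  rewrite mulnAC [X in (_ <= X)%N]mulnAC; apply: leq_mul => //.
rewrite -[X in X <= _]mulr_natr -[X in _ <= _ * X]mulr_natr exprMn expr_div_n.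
have -> : 'C(q, r)%:R * (b%:R ^+ k / q%:R ^+ k * x ^+ k * 'C(r, k)%:R) =
   x ^+ k * (('C(q, r) * 'C(r, k))%:R * b%:R ^+ k / q%:R ^+ k) :> R.
  by rewrite natrM; ring.
apply: ler_wpM2l; first exact: exprn_ge0.
by rewrite ler_pdivlMr.
Qed.


Lemma bad_bound (B : {set T}) (r : nat) (c : R) : 0 < c -> c <= 1/2 -> (0 < #|T|)%N ->
  #|B|%:R <= (1 - c) * #|T|%:R ->
  #|[set S : {set T} | (#|S| == r) && (r%:R - c / 2 * r%:R < #|S :&: B|%:R)]|%:R
    <= 'C(#|T|, r)%:R * expR (- (r%:R * c ^+ 2 / 2)) :> R.
Proof.
move=> c0 c1 q0 hB.
set Bad := [set S : {set T} | _].
set e := expR (1 : R).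
set t := r%:R - c / 2 * r%:R.
have e1 : 1 <= e by rewrite /e -expR0 ler_expR.
have step1 : #|Bad|%:R * expR t <= \sum_(S : {set T} | #|S| == r) e ^+ #|S :&: B|.
  rewrite (bigID (fun S : {set T} => t < #|S :&: B|%:R)) /=.
  apply: le_trans (_ : _ <= \sum_(S : {set T} | (#|S| == r) && (t < #|S :&: B|%:R)) e ^+ #|S :&: B|) _.
    have -> : #|Bad|%:R * expR t = \sum_(S in Bad) expR t by rewrite sumr_const mulr_natl.
    rewrite [X in _ <= X](eq_bigl (fun S => S \in Bad)); last by move=> S; rewrite inE.
    apply: ler_sum => S; rewrite inE => /andP[_ ht].
    by rewrite /e -expRM_natl mulr1 ler_expR ltW.
  rewrite lerDl; apply: sumr_ge0 => S _; apply: exprn_ge0; lra.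
have step2 := @gen_bound B r e e1 q0.
have hbq : #|B|%:R / #|T|%:R <= 1 - c :> R.
  by rewrite ler_pdivrMr ?ltr0n.
have step3 : #|B|%:R / #|T|%:R * (e - 1) + 1 <= c + (1 - c) * e.
  have : #|B|%:R / #|T|%:R * (e - 1) <= (1 - c) * (e - 1).
    by apply: ler_wpM2r; lra.
  lra.
have step4 : (#|B|%:R / #|T|%:R * (e - 1) + 1) ^+ r <= expR (r%:R * (1 - c/2 - c^+2/2)).
  rewrite expRM_natl; apply: le_trans (lerXn2r _ _ _ step3) _.
  - rewrite nnegrE addr_ge0 // mulr_ge0 ?divr_ge0 ?ler0n //; lra.
  - rewrite nnegrE; have : 0 <= e by lra. nra.
  apply: lerXn2r; rewrite ?nnegrE ?expR_ge0 //.
    have : 0 <= e by lra. nra.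
  exact: key_ineq.
have Cge : 0 <= 'C(#|T|, r)%:R :> R by rewrite ler0n.
have : #|Bad|%:R * expR t <= 'C(#|T|, r)%:R * expR (- (r%:R * c ^+ 2 / 2)) * expR t.
  rewrite -mulrA -expRD.
  have -> : - (r%:R * c ^+ 2 / 2) + t = r%:R * (1 - c/2 - c^+2/2) by rewrite /t; ring.
  apply: (le_trans step1); apply: (le_trans step2).
  by apply: ler_wpM2l.
by rewrite ler_pM2r ?expR_gt0.
Qed.

End RC.

Local Open Scope ring_scope.

Section Rows.
Variable F : finType.
Variable H : {set F * F}.

Definition row (b : F) : {set F} := [set a | (a, b) \in H].

Lemma card_row_sub (S1 : {set F}) b :
  #|[set p : F * F | (p.1 \in S1) && (p.2 == b)] :&: H| = #|S1 :&: row b|.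
Proof.
have inj : injective (fun a : F => (a, b)) by move=> x y [].
rewrite -(card_imset _ inj); apply: eq_card => -[a b'].
rewrite !inE /=; apply/idP/imsetP.
- move=> /andP[/andP[aS /eqP ->] aH]; exists a => //.
  by rewrite !inE aS.
- by move=> [a' + [-> ->]]; rewrite !inE => /andP[-> ->]; rewrite eqxx.
Qed.

Lemma card_row b : #|[set p : F * F | p.2 == b] :&: H| = #|row b|.
Proof.
rewrite -[row b]finset.setTI -card_row_sub; apply: eq_card => p.
by rewrite !inE.
Qed.

Lemma card_colsum (S2 : {set F}) :
  #|finset.setX [set: F] S2 :&: H| = (\sum_(b in S2) #|row b|)%N.
Proof.
rewrite -sum1_card (partition_big snd (fun b => b \in S2)) /=; last first.
  by move=> [a b]; rewrite !inE /= => /andP[].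
apply: eq_bigr => b bS2.
rewrite sum1dep_card -card_row; apply: eq_card => -[a b'].
rewrite !inE /=; case: eqP => [-> | _]; last by rewrite andbF.
by rewrite bS2 andbT.
Qed.

Lemma card_total : #|H| = (\sum_b #|row b|)%N.
Proof.
have -> : (\sum_b #|row b| = \sum_(b in [set: F]) #|row b|)%N.
  by apply: eq_bigl => b; rewrite inE.
rewrite -(card_colsum [set: F]); apply: eq_card => -[a b].
by rewrite !inE.
Qed.
End Rows.

Local Open Scope ring_scope.

Theorem lemmaA2 (R : realType) (F : finFieldType) (gamma : R)
    (H : {set F * F}) (r : nat) :
  0 < gamma -> gamma <= 1 / 2 ->
  (#|H|%:R : R) = 2 * gamma * (#|F|%:R) ^+ 2 ->
  2 * ln (#|F|%:R : R) / gamma ^+ 2 < r%:R ->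
  (r%:R : R) <= gamma * #|F|%:R ->
  exists S1 S2 : {set F},
    [/\ #|S1| = r,
        gamma * #|F|%:R <= (#|S2|%:R : R),
        (#|H|%:R : R) / 2 <= #|finset.setX [set: F] S2 :&: H|%:R,
        (forall b, b \in S2 ->
           gamma * #|F|%:R <= (#|[set p : F * F | p.2 == b] :&: H|%:R : R)) &
        (forall b, b \in S2 ->
           gamma / 2 * #|S1|%:R <=
             (#|[set p : F * F | (p.1 \in S1) && (p.2 == b)] :&: H|%:R : R))].
Proof.
move=> g0 g1 hH hr1 hr2.
have q0 : (0 < #|F|)%N by apply/card_gt0P; exists 0.
set q := #|F| in q0 hH hr1 hr2 *.
have qR0 : 0 < q%:R :> R by rewrite ltr0n.
set d := fun b => #|@row F H b|.
set S2 := [set b : F | gamma * q%:R <= (d b)%:R].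
have dq : forall b, (d b <= q)%N by move=> b; exact: max_card.
have tot : \sum_b (d b)%:R = 2 * gamma * q%:R ^+ 2 :> R.
  by rewrite -natr_sum -hH /d -card_total.
have split_sum : \sum_b (d b)%:R = \sum_(b in S2) (d b)%:R + \sum_(b in ~: S2) (d b)%:R :> R.
  rewrite (bigID (fun b => b \in S2)) /=; congr (_ + _).
  by apply: eq_bigl => b /=; rewrite finset.in_setC.
have outside : \sum_(b in ~: S2) (d b)%:R <= gamma * q%:R ^+ 2 :> R.
  apply: le_trans (_ : _ <= \sum_(b in ~: S2) gamma * q%:R) _.
    apply: ler_sum => b; rewrite !inE -ltNge => /ltW //.
  rewrite sumr_const -mulr_natl.
  have : (#|~: S2|%:R <= q%:R :> R) by rewrite ler_nat max_card.
  move=> h; rewrite expr2.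
  have hh : 0 <= (q%:R - #|~: S2|%:R) * (gamma * q%:R) :> R.
    by apply: mulr_ge0; [lra | apply: mulr_ge0; lra].
  lra.
have inside : gamma * q%:R ^+ 2 <= \sum_(b in S2) (d b)%:R :> R.
  by have := split_sum; rewrite tot; lra.
have S2big : gamma * q%:R <= #|S2|%:R :> R.
  have : \sum_(b in S2) (d b)%:R <= #|S2|%:R * q%:R :> R.
    apply: le_trans (_ : _ <= \sum_(b in S2) q%:R) _.
      by apply: ler_sum => b _; rewrite ler_nat.
    by rewrite sumr_const mulr_natl.
  move=> h; rewrite -(ler_pM2r qR0); apply: le_trans h.
  by apply: le_trans inside; rewrite expr2 mulrA.
have rq : (r <= q)%N.
  rewrite -(ler_nat R); apply: le_trans hr2 _.
  rewrite -[X in _ <= X]mul1r ler_wpM2r ?ler0n //; lra.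
set C := 'C(q, r).
have C0 : (0 < C)%N by rewrite bin_gt0.
set E := expR (- (r%:R * gamma ^+ 2 / 2)) : R.
have qE : q%:R * E < 1.
  have hl : ln (q%:R : R) < r%:R * gamma ^+ 2 / 2.
    have g2 : 0 < gamma ^+ 2 by apply: exprn_gt0.
    move: hr1; rewrite ltr_pdivrMr // => h.
    rewrite ltr_pdivlMr //; lra.
  rewrite -[q%:R](@lnK R) ?posrE // /E -expRD expR_lt1; lra.
pose Bad b := [set S : {set F} | (#|S| == r) &&
   (r%:R - gamma / 2 * r%:R < #|S :&: ~: row F H b|%:R)].
have badb : forall b, b \in S2 -> #|Bad b|%:R <= C%:R * E.
  move=> b; rewrite inE => hb.
  apply: bad_bound => //.
  have := cardsC (row F H b); rewrite -/q => hc.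
  have : (#|~: row F H b|%:R = q%:R - (d b)%:R :> R).
    rewrite -hc natrD; ring.
  move=> ->; rewrite /d; lra.
have sumbad : \sum_(b in S2) #|Bad b|%:R < C%:R :> R.
  apply: le_lt_trans (_ : _ <= \sum_(b in S2) C%:R * E) _.
    exact: ler_sum.
  rewrite sumr_const -[X in X < _]mulr_natl.
  have : (#|S2|%:R <= q%:R :> R) by rewrite ler_nat max_card.
  have E0 : 0 < E by apply: expR_gt0.
  have CR0 : 0 < C%:R :> R by rewrite ltr0n.
  move=> h.
  have h1 : #|S2|%:R * (C%:R * E) <= q%:R * (C%:R * E) :> R.
    by apply: ler_wpM2r => //; apply: mulr_ge0; apply: ltW.
  apply: le_lt_trans h1 _.
  rewrite mulrCA -[X in _ < X]mulr1 ltr_pM2l //.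
case: (pickP (fun S : {set F} => (#|S| == r) &&
   [forall b in S2, gamma / 2 * r%:R <= #|S :&: row F H b|%:R])) => [S1 | none].
  move=> /andP[/eqP cS1 /forall_inP good].
  exists S1, S2; split => //.
  - rewrite card_colsum natr_sum -/d.
    apply: le_trans inside; rewrite hH; lra.
  - move=> b hb; rewrite card_row; move: hb; rewrite inE.
    done.
  - move=> b hb; rewrite card_row_sub cS1; exact: good.
exfalso.
have cnt : (C <= \sum_(b in S2) #|Bad b|)%N.
  have sb : forall b, (\sum_(S : {set F} | #|S| == r) (S \in Bad b) = #|Bad b|)%N.
    move=> b; rewrite -sum1_card big_mkcond /= [RHS]big_mkcond /=.
    apply: eq_bigr => S _; rewrite inE; case: (#|S| == r) => //=.
  rewrite (eq_bigr _ (fun b _ => esym (sb b))) exchange_big /=.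
  rewrite /C -card_draws -sum1dep_card.
  apply: leq_sum => S /eqP cS.
  have := none S; rewrite cS eqxx /= => /negbT /forall_inPn [b hb nb].
  rewrite (bigD1 b) //=.
  have -> : S \in Bad b.
    rewrite inE cS eqxx /=.
    have := cardsID (row F H b) S; rewrite finset.setDE => hc.
    have : (#|S :&: ~: row F H b|%:R = r%:R - #|S :&: row F H b|%:R :> R).
      by rewrite -cS -hc natrD; ring.
    move=> ->; rewrite -ltNge in nb; lra.
  by [].
have := sumbad; rewrite -natr_sum ltr_nat => h.
by have := leq_ltn_trans cnt h; rewrite ltnn.
Qed.
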